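(* Assume the Lipschitz gradient assumption, $r_1>L_x$, $r_2>L_y$, and the dual K\L{} assumption with exponent $\theta\in(0,1)$. If $(x,y)\in\mathcal X\times\mathcal Y$ is an $\epsilon$-GS, then $x$ is an $\mathcal O(\epsilon^{\min\{1,\frac{1}{2\theta}\}})$-OS, i.e. $\|x^*(x)-x\|\le\mathcal O(\epsilon^{\min\{1,\frac1{2\theta}\}})$, where the constant depends only on the problem data and $r_1,r_2$.
   Context: Let $\mathcal X\subset\mathbb R^n$, $\mathcal Y\subset\mathbb R^d$ be nonempty convex compact sets and $f:\mathbb R^n\times\mathbb R^d\to\mathbb R$ continuously differentiable. Lipschitz gradient assumption: there are $L_x,L_y>0$ such that for all $x,x'\in\mathcal X$, $y,y'\in\mathcal Y$, $\|\nabla_x f(x,y)-\nabla_x f(x',y')\|\le L_x(\|x-x'\|+\|y-y'\|)$ and $\|\nabla_y f(x,y)-\nabla_y f(x',y')\|\le L_y(\|x-x'\|+\|y-y'\|)$. Let $N_{\mathcal X}(x)=\partial\mathbf 1_{\mathcal X}(x)$ denote the normal cone. A point $(x,y)\in\mathcal X\times\mathcal Y$ is an $\epsilon$-game stationary point ($\epsilon$-GS) if $\mathrm{dist}(0,\nabla_xf(x,y)+N_{\mathcal X}(x))\le\epsilon$ and $\mathrm{dist}(0,-\nabla_yf(x,y)+N_{\mathcal Y}(y))\le\epsilon$. For $z\in\mathbb R^n$ let $x^*(z)=\arg\min_{x\in\mathcal X}\max_{y\in\mathcal Y}\{f(x,y)+\frac{r_1}{2}\|x-z\|^2\}$ (equivalently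 the proximal point of $\max_{y\in\mathcal Y}f(\cdot,y)/r_1+\mathbf 1_{\mathcal X}$ at $z$); $z$ is an $\epsilon$-optimization stationary point ($\epsilon$-OS) if $\|x^*(z)-z\|\le\epsilon$. Dual K\L{} assumption: for every $x\in\mathcal X$, $\max_{y\in\mathcal Y}f(x,y)$ is attained and finite, and there exist $\tau>0$, $\theta\in(0,1)$ with $(\max_{y'\in\mathcal Y}f(x,y')-f(x,y))^\theta\le\frac1\tau\mathrm{dist}(0,-\nabla_yf(x,y)+N_{\mathcal Y}(y))$ for all $x\in\mathcal X$, $y\in\mathcal Y$. *)

(* Defs.v *)
From HB Require Import structures.
From mathcomp Require Import all_boot all_order all_algebra.
From mathcomp Require Import all_classical all_reals all_analysis.
Set Implicit Arguments. Unset Strict Implicit. Unset Printing Implicit Defensive.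
Import Order.TTheory GRing.Theory Num.Theory.
Import numFieldNormedType.Exports.
Local Open Scope classical_set_scope.
Local Open Scope ring_scope.

Section Defs.
Variable R : realType.

Definition dotv (n : nat) (u v : 'rV[R]_n) : R := \sum_(i < n) u ord0 i * v ord0 i.
Definition enorm (n : nat) (u : 'rV[R]_n) : R := Num.sqrt (dotv u u).

(* normal cone N_C(x) = subdifferential of the indicator of C at x
   (empty when x is not in C) *)
Definition normal_cone (n : nat) (C : set 'rV[R]_n) (x : 'rV[R]_n) : set 'rV[R]_n :=
  [set w | C x /\ forall c, C c -> dotv w (c - x) <= 0].

Definition dist0 (n : nat) (A : set 'rV[R]_n) : R := inf [set enorm a | a in A].

Definition C1_with_grad (n d : nat) (f : 'rV[R]_n -> 'rV[R]_d -> R)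
  (gx : 'rV[R]_n -> 'rV[R]_d -> 'rV[R]_n) (gy : 'rV[R]_n -> 'rV[R]_d -> 'rV[R]_d) : Prop :=
  (forall x y (e : R), 0 < e -> exists2 del : R, 0 < del &
     forall hx hy, enorm hx + enorm hy < del ->
       `| f (x + hx) (y + hy) - f x y - dotv (gx x y) hx - dotv (gy x y) hy |
         <= e * (enorm hx + enorm hy)) /\
  (forall x y (e : R), 0 < e -> exists2 del : R, 0 < del &
     forall x' y', enorm (x' - x) + enorm (y' - y) < del ->
       enorm (gx x' y' - gx x y) + enorm (gy x' y' - gy x y) < e).

Definition lipschitz_grad (n d : nat) (X : set 'rV[R]_n) (Y : set 'rV[R]_d)
  (gx : 'rV[R]_n -> 'rV[R]_d -> 'rV[R]_n) (gy : 'rV[R]_n -> 'rV[R]_d -> 'rV[R]_d)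
  (Lx Ly : R) : Prop :=
  0 < Lx /\ 0 < Ly /\
  forall x x' y y', X x -> X x' -> Y y -> Y y' ->
    enorm (gx x y - gx x' y') <= Lx * (enorm (x - x') + enorm (y - y')) /\
    enorm (gy x y - gy x' y') <= Ly * (enorm (x - x') + enorm (y - y')).

Definition maxval (n d : nat) (Y : set 'rV[R]_d) (f : 'rV[R]_n -> 'rV[R]_d -> R)
  (x : 'rV[R]_n) : R := sup [set f x y | y in Y].

Definition dual_KL (n d : nat) (X : set 'rV[R]_n) (Y : set 'rV[R]_d)
  (f : 'rV[R]_n -> 'rV[R]_d -> R) (gy : 'rV[R]_n -> 'rV[R]_d -> 'rV[R]_d)
  (tau theta : R) : Prop :=
  0 < tau /\ 0 < theta < 1 /\
  (forall x, X x -> exists2 ym, Y ym & forall y, Y y -> f x y <= f x ym) /\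
  (forall x y, X x -> Y y ->
     (maxval Y f x - f x y) `^ theta
       <= tau^-1 * dist0 [set - gy x y + w | w in normal_cone Y y]).

Definition eps_GS (n d : nat) (X : set 'rV[R]_n) (Y : set 'rV[R]_d)
  (gx : 'rV[R]_n -> 'rV[R]_d -> 'rV[R]_n) (gy : 'rV[R]_n -> 'rV[R]_d -> 'rV[R]_d)
  (eps : R) (x : 'rV[R]_n) (y : 'rV[R]_d) : Prop :=
  X x /\ Y y /\
  dist0 [set gx x y + w | w in normal_cone X x] <= eps /\
  dist0 [set - gy x y + w | w in normal_cone Y y] <= eps.

Definition is_xstar (n d : nat) (X : set 'rV[R]_n) (Y : set 'rV[R]_d)
  (f : 'rV[R]_n -> 'rV[R]_d -> R) (r1 : R) (z xs : 'rV[R]_n) : Prop :=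
  X xs /\ forall x, X x ->
    maxval Y (fun u v => f u v + r1 / 2 * enorm (u - z) ^+ 2) xs
      <= maxval Y (fun u v => f u v + r1 / 2 * enorm (u - z) ^+ 2) x.

End Defs.

(* Main.v *)
Require Import Defs.
From HB Require Import structures.
From mathcomp Require Import all_boot all_order all_algebra.
From mathcomp Require Import all_classical all_reals all_analysis.
From mathcomp Require Import ring lra.
Import Order.TTheory GRing.Theory Num.Theory.
Import numFieldNormedType.Exports.
Local Open Scope classical_set_scope.
Local Open Scope ring_scope.
Local Open Scope convex_scope.
Set Implicit Arguments. Unset Strict Implicit.

Section Vec.
Variable R : realType.
Variable n : nat.
Implicit Types u v w : 'rV[R]_n.

Lemma dotvC u v : dotv u v = dotv v u.
Proof. by apply: eq_bigr => i _; rewrite mulrC. Qed.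

Lemma dotvDl u v w : dotv (u + v) w = dotv u w + dotv v w.
Proof. by rewrite /dotv -big_split; apply: eq_bigr => i _; rewrite mxE mulrDl. Qed.

Lemma dotvDr u v w : dotv w (u + v) = dotv w u + dotv w v.
Proof. by rewrite dotvC dotvDl !(dotvC w). Qed.

Lemma dotvZl (a : R) u v : dotv (a *: u) v = a * dotv u v.
Proof. by rewrite /dotv mulr_sumr; apply: eq_bigr => i _; rewrite mxE mulrA. Qed.

Lemma dotvZr (a : R) u v : dotv v (a *: u) = a * dotv v u.
Proof. by rewrite dotvC dotvZl dotvC. Qed.

Lemma dotvNl u v : dotv (- u) v = - dotv u v.
Proof. by rewrite -scaleN1r dotvZl mulN1r. Qed.

Lemma dotvNr u v : dotv v (- u) = - dotv v u.
Proof. by rewrite dotvC dotvNl dotvC. Qed.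

Lemma dotvBl u v w : dotv (u - v) w = dotv u w - dotv v w.
Proof. by rewrite dotvDl dotvNl. Qed.

Lemma dotvBr u v w : dotv w (u - v) = dotv w u - dotv w v.
Proof. by rewrite dotvDr dotvNr. Qed.

Lemma dotv0l u : dotv 0 u = 0.
Proof. by rewrite /dotv big1 // => i _; rewrite mxE mul0r. Qed.

Lemma dotv0r u : dotv u 0 = 0.
Proof. by rewrite dotvC dotv0l. Qed.

Lemma dotv_ge0 u : 0 <= dotv u u.
Proof. by apply: sumr_ge0 => i _; rewrite -expr2 sqr_ge0. Qed.

Lemma enorm_ge0 u : 0 <= enorm u.
Proof. exact: sqrtr_ge0. Qed.

Lemma enorm_sq u : enorm u ^+ 2 = dotv u u.
Proof. by rewrite /enorm sqr_sqrtr // dotv_ge0. Qed.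

Lemma enorm0 : enorm (0 : 'rV[R]_n) = 0.
Proof. by rewrite /enorm dotv0l sqrtr0. Qed.

Lemma enormZ (a : R) u : enorm (a *: u) = `|a| * enorm u.
Proof.
rewrite /enorm dotvZl dotvZr mulrA -expr2 sqrtrM ?sqr_ge0 //.
by rewrite sqrtr_sqr.
Qed.

Lemma enormN u : enorm (- u) = enorm u.
Proof. by rewrite -scaleN1r enormZ normrN normr1 mul1r. Qed.

Lemma CS u v : dotv u v <= enorm u * enorm v.
Proof.
set B := dotv u v; set A := dotv u u; set C := dotv v v.
have q l : 0 <= A - 2 * l * B + l ^+ 2 * C.
  have := dotv_ge0 (u - l *: v).
  rewrite dotvBl !dotvBr !dotvZl !dotvZr (dotvC v u) -/A -/B -/C.
  by congr (0 <= _); ring.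
have [Ble0|Bgt0] := leP B 0.
  by apply: le_trans Ble0 _; rewrite mulr_ge0 // enorm_ge0.
have A0 : 0 <= A by apply: dotv_ge0.
have C0 : 0 <= C by apply: dotv_ge0.
have [C0'|Cpos] := eqVneq C 0.
  have := q ((A + 1) / (2 * B)); rewrite C0' mulr0 addr0.
  have -> : A - 2 * ((A + 1) / (2 * B)) * B = -1.
    by field; rewrite gt_eqF.
  by rewrite oppr_ge0 leNgt ltr01.
have Cp : 0 < C by rewrite lt_def Cpos C0.
have h : B ^+ 2 <= A * C.
  have := q (B / C).
  have -> : A - 2 * (B / C) * B + (B / C) ^+ 2 * C = A - B ^+ 2 / C.
    by field; rewrite gt_eqF.
  by rewrite subr_ge0 ler_pdivrMr.
rewrite /enorm -sqrtrM // -(ger0_norm (ltW Bgt0)) -sqrtr_sqr.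
by rewrite ler_sqrt // mulr_ge0.
Qed.

Lemma CSn u v : - (enorm u * enorm v) <= dotv u v.
Proof. by rewrite lerNl -dotvNl -(enormN u) CS. Qed.

End Vec.
Lemma convex_seg (R : realType) n (X : set 'rV[R]_n) u v (t : R) :
  convex_set X -> X u -> X v -> 0 <= t <= 1 -> X (u + t *: (v - u)).
Proof.
move=> cX Xu Xv /andP[t0 t1].
pose l : {i01 R} := Itv01 t0 t1.
have := cX v u l; rewrite !inE => /(_ Xv Xu).
congr X.
rewrite /conv /= /unstable.onem scalerBl scale1r scalerBr.
by rewrite addrCA.
Qed.
Lemma is_derive_ed (R : realType) (F : R -> R) t L :
  (forall e : R, 0 < e -> exists2 del : R, 0 < del & forall s : R, s != 0 -> `|s| < del ->
     `|F (s + t) - F t - s * L| <= e * `|s|) -> is_derive t 1 F L.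
Proof.
move=> H.
have cv : (fun h => h^-1 *: ((F \o shift t) (h *: 1) - F t)) @ 0^' --> L.
  apply/cvgrPdist_le => e e0.
  have [del del0 Hd] := H e e0.
  exists del => //= s /= Hs sn0.
  have Hs' : `|s| < del by move: Hs; rewrite /ball /= sub0r normrN.
  have := Hd s sn0 Hs'.
  rewrite [s%:A]mulr1.
  have -> : L - s^-1 *: (F (s + t) - F t) = - s^-1 * (F (s + t) - F t - s * L).
    by rewrite /GRing.scale /=; field.
  rewrite normrM normrN normrV ?unitfE // => h.
  by rewrite mulrC ler_pdivrMr ?normr_gt0.
apply: DeriveDef.
  by apply/cvg_ex; exists L.
by apply: cvg_lim.
Qed.

Lemma descent (R : realType) n d (X : set 'rV[R]_n) (Y : set 'rV[R]_d) f gx gy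
  (Lx Ly : R) : convex_set X -> C1_with_grad f gx gy ->
  lipschitz_grad X Y gx gy Lx Ly ->
  forall u v y, X u -> X v -> Y y ->
  f u y + dotv (gx u y) (v - u) - Lx / 2 * enorm (v - u) ^+ 2 <= f v y.
Proof.
move=> cX [C1 _] [Lx0 [Ly0 Lip]] u v y Xu Xv Yy.
set h := v - u; set g0 := gx u y; set c := dotv h h.
have c0 : 0 <= c by apply: dotv_ge0.
pose phi t := f (u + t *: h) y - t * dotv g0 h + Lx / 2 * t ^+ 2 * c.
pose L t := dotv (gx (u + t *: h) y) h - dotv g0 h + Lx * t * c.
have dphi (t : R) : is_derive t (1 : R) phi (L t).
  apply: is_derive_ed => e e0.
  set p := u + t *: h.
  have e1 : 0 < e / 2 / (enorm h + 1).
    by rewrite divr_gt0 ?divr_gt0 // ltr_wpDl ?enorm_ge0.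
  have [del1 del10 Hd] := C1 p y _ e1.
  exists (Num.min (del1 / (enorm h + 1)) (e / (Lx * c + 1))).
    by rewrite lt_min !divr_gt0 // ?ltr_wpDl ?enorm_ge0 ?mulr_ge0 // ltW.
  move=> s s0; rewrite lt_min => /andP[hs1 hs2].
  have := Hd (s *: h) 0.
  rewrite enorm0 addr0 enormZ.
  have sh : `|s| * enorm h < del1.
    apply: le_lt_trans (_ : `|s| * (enorm h + 1) < del1).
      by rewrite ler_wpM2l // lerDl.
    by rewrite -ltr_pdivlMr // ltr_wpDl ?enorm_ge0.
  move=> /(_ sh); rewrite addr0 dotv0r subr0 dotvZr.
  have -> : phi (s + t) - phi t - s * L t =
    (f (p + s *: h) y - f p y - s * dotv (gx p y) h) + Lx / 2 * c * (s * s).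
    rewrite /phi /L /p scalerDl (addrC (s *: h)) addrA.
    move: (f _ y) (f (u + t *: h) y) (dotv g0 h) (dotv (gx (u + t *: h) y) h) => A B D1 D2.
    by field.
  move=> H1.
  apply: le_trans (ler_normD _ _) _.
  have -> : e * `|s| = e / 2 * `|s| + e / 2 * `|s| by field.
  apply: lerD.
    apply: le_trans H1 _.
    have hp : 0 < enorm h + 1 by rewrite ltr_wpDl ?enorm_ge0.
    have -> : e / 2 / (enorm h + 1) * (`|s| * enorm h) =
       e / 2 * `|s| * (enorm h / (enorm h + 1)).
      by field; rewrite gt_eqF.
    rewrite ler_piMr ?mulr_ge0 ?divr_ge0 ?ltW ?normr_ge0 //.
      by rewrite normr_gt0.
    by rewrite ltr_pdivrMr // mul1r ltrDl.
  have Lc : 0 <= Lx * c by rewrite mulr_ge0 // ltW.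
  have -> : `|Lx / 2 * c * (s * s)| = (Lx * c * `|s|) / 2 * `|s|.
    have h2 : `|2^-1 : R| = 2^-1 by rewrite ger0_norm // invr_ge0.
    rewrite !normrM (ger0_norm c0) h2 ger0_norm ?ltW //.
    by field.
  apply: ler_wpM2r; first exact: normr_ge0.
  apply: ler_wpM2r; first by rewrite invr_ge0.
  apply: le_trans (_ : (Lx * c + 1) * `|s| <= e).
    by apply: ler_wpM2r; rewrite ?normr_ge0 ?lerDl.
  by rewrite -ler_pdivlMl ?ltr_wpDl // mulrC ltW.
have der (t : R) : derivable phi t 1 by case: (dphi t).
have cont : {within `[0, 1], continuous phi}.
  by apply: derivable_within_continuous => t _; exact: der.
have nonneg (t : R) : t \in `]0, 1[ -> 0 <= derive1 phi t.
  move=> tin; rewrite derive1E; have [_ ->] := dphi t.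
  have t0 : 0 <= t by rewrite ltW // (itvP tin).
  have t01 : 0 <= t <= 1 by rewrite t0 ltW // (itvP tin).
  have Xp := @convex_seg R n X u v t cX Xu Xv t01.
  have [Lip1 _] := Lip (u + t *: h) u y y Xp Xu Yy Yy.
  rewrite subrr enorm0 addr0 (addrC u) addrK enormZ (ger0_norm t0) in Lip1.
  rewrite /L -dotvBl.
  have := CSn (gx (u + t *: h) y - g0) h.
  have : enorm (gx (u + t *: h) y - g0) * enorm h <= Lx * t * c.
    rewrite /c -enorm_sq expr2 mulrA.
    rewrite (addrC (t *: h)) -/g0 in Lip1.
    by apply: ler_wpM2r; rewrite ?enorm_ge0 // -mulrA.
  move: (dotv (gx (u + t *: h) y - g0) h) (enorm (gx (u + t *: h) y - g0) * enorm h) => D E h1 h2.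
  lra.
have := ger0_derive1_ndecr (fun t _ => der t) nonneg cont (lexx 0) ler01 (lexx 1).
rewrite /phi scale0r addr0 mul0r subr0 expr0n /= mulr0 mul0r addr0.
rewrite scale1r mul1r expr1n mulr1 /h (addrC u) subrK -/h.
rewrite /c -enorm_sq.
move: (f u y) (f v y) (dotv g0 h) (enorm h ^+ 2) => A B D E.
lra.
Qed.
Lemma compact_enorm_bound (R : realType) n (X : set 'rV[R]_n) :
  compact X -> exists M : R, 0 <= M /\ forall a b, X a -> X b -> enorm (a - b) <= M.
Proof.
move=> cX.
have [B [_ HB]] := compact_bounded cX.
have HB1 : forall x, X x -> `|x| <= `|B| + 1.
  by apply: HB; rewrite (le_lt_trans (ler_norm B)) // ltrDl.
set B' := `|B| + 1.
have B'0 : 0 <= B' by rewrite addr_ge0.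
have ent x i : X x -> `|x ord0 i| <= B'.
  move=> Xx; apply: le_trans (HB1 x Xx).
  have := le_bigmax 0 (fun ij : 'I_1 * 'I_n => `|x ij.1 ij.2|) (ord0, i).
  by rewrite -mx_normrE.
exists (Num.sqrt (\sum_(i < n) (B' + B') ^+ 2)); split; first exact: sqrtr_ge0.
move=> a b Xa Xb.
rewrite /enorm ler_sqrt; last by apply: sumr_ge0 => i _; apply: sqr_ge0.
apply: ler_sum => i _.
rewrite !mxE.
have hx : `|a ord0 i - b ord0 i| <= B' + B'.
  by apply: le_trans (ler_normB _ _) _; apply: lerD; apply: ent.
move: (a ord0 i - b ord0 i) hx => z hz.
rewrite -expr2 -(ger0_norm (sqr_ge0 z)) normrX.
by rewrite lerXn2r ?nnegrE ?normr_ge0 ?addr_ge0.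
Qed.

Lemma sup_img_ge (R : realType) (T : Type) (Y : set T) (F : T -> R) ym y :
  (forall v, Y v -> F v <= F ym) -> Y y -> F y <= sup [set F v | v in Y].
Proof.
move=> Hm Yy; apply: sup_upper_bound; last by exists y.
split; first by exists (F y), y.
by exists (F ym) => _ [v Yv <-]; apply: Hm.
Qed.

Lemma le_delta (R : realType) (a b D : R) : 0 <= D ->
  (forall del, 0 < del -> a <= b + del * D) -> a <= b.
Proof.
move=> D0 H; rewrite leNgt; apply/negP => ab.
have hp : 0 < D + 1 by rewrite ltr_wpDl.
have ab' : 0 < a - b by rewrite subr_gt0.
have h := H ((a - b) / (D + 1)) (divr_gt0 ab' hp).
have : (a - b) / (D + 1) * D < a - b.
  by rewrite -mulrA gtr_pMr // ltr_pdivrMl // mulr1 ltrDl.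
move: h; move: ((a - b) / (D + 1) * D) => z; lra.
Qed.

Unset Implicit Arguments.
Local Close Scope convex_scope.

Theorem mainTheorem8 (R : realType) (n d : nat)
  (X : set 'rV[R]_n) (Y : set 'rV[R]_d)
  (f : 'rV[R]_n -> 'rV[R]_d -> R)
  (gx : 'rV[R]_n -> 'rV[R]_d -> 'rV[R]_n) (gy : 'rV[R]_n -> 'rV[R]_d -> 'rV[R]_d)
  (Lx Ly r1 r2 tau theta : R) :
  X !=set0 -> convex_set X -> compact X ->
  Y !=set0 -> convex_set Y -> compact Y ->
  C1_with_grad f gx gy ->
  lipschitz_grad X Y gx gy Lx Ly ->
  Lx < r1 -> Ly < r2 ->
  dual_KL X Y f gy tau theta ->
  exists2 C : R, 0 < C &
    forall (eps : R) (x : 'rV[R]_n) (y : 'rV[R]_d), 0 < eps ->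
      eps_GS X Y gx gy eps x y ->
      forall xs, is_xstar X Y f r1 x xs ->
        enorm (xs - x) <= C * eps `^ (Num.min 1 (1 / (2 * theta))).
Proof.
move=> _ cX compX _ _ _ C1 Lip hr1 _ [tau0 [/andP[th0 th1] [attain KL]]].
have [Dm [Dm0 HDm]] := compact_enorm_bound compX.
have Lx0 : 0 < Lx by case: Lip.
set A := (r1 - Lx) / 2.
have A0 : 0 < A by rewrite divr_gt0 // subr_gt0.
set q := 1 / (2 * theta).
have q0 : 0 < q by rewrite divr_gt0 // mulr_gt0.
set K := Num.sqrt (2 / A) * (tau^-1) `^ q.
have K0 : 0 <= K by rewrite mulr_ge0 ?sqrtr_ge0 ?powR_ge0.
exists (2 / A + K + Dm).
  by rewrite ltr_wpDr // ltr_wpDr // divr_gt0.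
move=> eps x y eps0 [Xx [Yy [gsx gsy]]] xs [Xxs hmin].
set D := enorm (xs - x).
have D0 : 0 <= D by apply: enorm_ge0.
set E := ((tau^-1 * eps) `^ q) ^+ 2.
have key : A * D ^+ 2 <= E + eps * D.
  set M := maxval Y f x.
  have [ym Yym Hym] := attain x Xx.
  have fM : f x y <= M by apply: (sup_img_ge (F := f x) Hym Yy).
  have GE : M - f x y <= E.
    have G0 : 0 <= M - f x y by rewrite subr_ge0.
    have h1 := KL x y Xx Yy.
    have h2 : (M - f x y) `^ theta <= tau^-1 * eps.
      by apply: le_trans h1 _; rewrite ler_wpM2l // invr_ge0 ltW.
    have ith : 0 < theta^-1 by rewrite invr_gt0.
    have h3 := ge0_ler_powR (ltW ith).
    have := h3 _ _ (powR_ge0 _ _ : (M - f x y) `^ theta \in Num.nneg) _ h2.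
    rewrite -powRrM mulfV ?gt_eqF // powRr1 // => h4.
    have nb : tau^-1 * eps \is Num.nneg by rewrite nnegrE mulr_ge0 // ?invr_ge0 ltW.
    apply: le_trans (h4 nb) _.
    rewrite /E -powR_mulrn ?powR_ge0 // -powRrM.
    have -> : q * 2%:R = theta^-1 by rewrite /q; field; rewrite gt_eqF.
    by [].
  have hd := descent cX C1 Lip Xx Xxs Yy.
  have hm := hmin x Xx.
  have hx : maxval Y (fun u v => f u v + r1 / 2 * enorm (u - x) ^+ 2) x = M.
    by rewrite /maxval /= subrr enorm0 expr0n /= mulr0; under eq_fun do rewrite addr0.
  have hxs : f xs y + r1 / 2 * D ^+ 2 <=
      maxval Y (fun u v => f u v + r1 / 2 * enorm (u - x) ^+ 2) xs.
    have [ym' Yym' Hym'] := attain xs Xxs.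
    rewrite /maxval /=.
    apply: (sup_img_ge (F := fun v => f xs v + r1 / 2 * D ^+ 2) _ Yy).
    by move=> v Yv; rewrite lerD2r; apply: Hym'.
  have hdot : forall del : R, 0 < del -> - ((eps + del) * D) <= dotv (gx x y) (xs - x).
    move=> del del0.
    have ne : [set enorm a | a in [set gx x y + w | w in normal_cone X x]] !=set0.
      exists (enorm (gx x y + 0)), (gx x y + 0) => //.
      exists 0 => //; split => // c _; by rewrite dotv0l.
    have hlt : inf [set enorm a | a in [set gx x y + w | w in normal_cone X x]] < eps + del.
      by apply: le_lt_trans gsx _; rewrite ltrDl.
    have [z [a [w [_ Hw] <-] <-] zlt] := inf_lt ne hlt.
    have h1 := Hw xs Xxs.
    have h2 := CSn (gx x y + w) (xs - x).
    rewrite dotvDl -/D in h2.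
    have h3 : enorm (gx x y + w) * D <= (eps + del) * D.
      by apply: ler_wpM2r => //; apply: ltW.
    move: h1 h2 h3; move: (dotv w (xs - x)) (dotv (gx x y) (xs - x)).
    move: (enorm (gx x y + w) * D) ((eps + del) * D) => a1 a2 a3 a4; lra.
  apply: (le_delta D0) => del del0.
  have := hdot del del0.
  rewrite -/D in hd.
  have hA : A * D ^+ 2 = r1 / 2 * D ^+ 2 - Lx / 2 * D ^+ 2 by rewrite /A; field.
  rewrite hA mulrDl.
  move: hd hm hxs GE; rewrite hx.
  lra.
set p := Num.min 1 q.
have p0 : 0 <= p by rewrite le_min ler01 ltW.
have p1 : p <= 1 by rewrite ge_min lexx.
have pq : p <= q by rewrite ge_min lexx orbT.
have C0 : 0 <= 2 / A + K + Dm by rewrite addr_ge0 // addr_ge0 // divr_ge0 // ltW.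
have Dcase : D <= 2 / A * eps \/ D <= K * eps `^ q.
  have [h|h] := leP E (eps * D).
    left.
    have h2 : A * D ^+ 2 <= 2 * (eps * D) by move: key h; move: (A * D ^+ 2) (eps * D) => a b; lra.
    have [->|Dp] := eqVneq D 0; first by apply: mulr_ge0; [apply: divr_ge0; [|apply: ltW] | apply: ltW].
    have Dpos : 0 < D by rewrite lt_def Dp D0.
    have h3 : (A * D) * D <= (2 * eps) * D by rewrite -mulrA -expr2 -mulrA.
    rewrite ler_pM2r // in h3.
    by rewrite mulrAC ler_pdivlMr // mulrC.
  right.
  have KW : K * eps `^ q = Num.sqrt (2 / A) * (tau^-1 * eps) `^ q.
    by rewrite /K -mulrA powRM // ?invr_ge0 ltW.
  rewrite KW.
  set W := (tau^-1 * eps) `^ q.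
  have W0 : 0 <= W by apply: powR_ge0.
  have hD2 : D ^+ 2 <= (Num.sqrt (2 / A) * W) ^+ 2.
    have s2 : Num.sqrt (2 / A) ^+ 2 = 2 / A by rewrite sqr_sqrtr // divr_ge0 // ltW.
    rewrite exprMn s2 mulrAC ler_pdivlMr // mulrC.
    rewrite -/E /E -/W in h key *.
    move: (A * D ^+ 2) (eps * D) key h => a b; lra.
  have w0 : 0 <= Num.sqrt (2 / A) * W by rewrite mulr_ge0 // sqrtr_ge0.
  move: (Num.sqrt (2 / A) * W) w0 hD2 => w w0 hD2.
  clear -D0 hD2 w0; move: D D0 hD2 => z z0 hz; nra.
have [e1|e1] := leP 1 eps.
  have ep1 : 1 <= eps `^ p.
    by rewrite -(powRr0 eps) ler_powR.
  apply: le_trans (HDm _ _ Xxs Xx) _.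
  have hA2 : 0 <= 2 / A by rewrite divr_ge0 // ltW.
  apply: le_trans (_ : 2 / A + K + Dm <= _); first lra.
  move: (eps `^ p) ep1 C0 => z hz; move: (2 / A + K + Dm) => w hw; nra.
have ep : eps <= eps `^ p.
  by rewrite -{1}(powRr1 (ltW eps0)) ger_powR // eps0 ltW.
have eq : eps `^ q <= eps `^ p by rewrite ger_powR // eps0 ltW.
have hA2 : 0 <= 2 / A by rewrite divr_ge0 // ltW.
have ep0 : 0 <= eps `^ p by apply: powR_ge0.
case: Dcase => h.
  apply: le_trans h _.
  apply: le_trans (_ : 2 / A * eps `^ p <= _).
    by rewrite ler_wpM2l.
  move: (eps `^ p) ep0 => z hz; move: (2 / A) hA2 => a ha; nra.
apply: le_trans h _.
apply: le_trans (_ : K * eps `^ p <= _); first by rewrite ler_wpM2l.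
move: (eps `^ p) ep0 => z hz; move: (2 / A) hA2 => a ha; nra.
Qed.
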